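(* Let $P$ be a non-trivial classifier on $\mathbb{R}^n$ (i.e. its label set $L_P$ has more than one element) with infinite pointwise coverage. Then $P$ is a refined linear classifier.
   Context: A classifier is a partition $P$ of $\mathbb{R}^n$ together with a distinguished member $R \in P$, the refinement set, which may be empty and which is both meagre and Lebesgue null. The label set is $L_P = P \setminus \{R\}$ and the feature space is $\bigcup L_P$. $P$ is trivial if $L_P$ is a singleton and non-trivial otherwise. For $x \in \mathbb{R}^n$, $P(x)$ denotes the member of $P$ containing $x$. An anchor for $x$ is an open ball $A = B(c,r)$ with $x \in A \subseteq P(x)$; its coverage is $r$. The coverage of $P$ at $x$ is $C_P(x) = \sup\{ r : B(c,r) \text{ is an anchor for } x\}$ ($0$ if no anchor exists, $\infty$ if anchors of arbitrarily large radius exist). $P$ has infinite pointwise coverage if $C_P(x) = \infty$ for every $x$ in the feature space. A refined linear classifier is a classifier $P = \{M, N, R\}$ with $L_P = \{M, N\}$, where $R$ is an affine hyperplane and $M, N$ are the two open halfspaces on either side of $R$. *)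

(* Defs.v *)
From HB Require Import structures.
From mathcomp Require Import all_boot all_order all_algebra.
From mathcomp Require Import all_classical all_reals.
From mathcomp Require Import ereal topology normedtype.
Set Implicit Arguments. Unset Strict Implicit. Unset Printing Implicit Defensive.
Import Order.TTheory GRing.Theory Num.Theory.
Import numFieldNormedType.Exports.
Local Open Scope classical_set_scope.
Local Open Scope ring_scope.

Section Defs.
Variables (R : realType) (n : nat).
Local Notation V := 'rV[R]_n.

Definition edist (x y : V) : R := Num.sqrt (\sum_(i < n) (x ord0 i - y ord0 i) ^+ 2).
Definition eball (c : V) (r : R) : set V := [set x | edist x c < r].

Definition nowhere_dense (A : set V) : Prop := interior (closure A) = set0.
Definition meagre (A : set V) : Prop :=
  exists F : nat -> set V, (forall k, nowhere_dense (F k)) /\ A `<=` \bigcup_k F k.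

Definition box (lo hi : V) : set V := [set x | forall i, lo ord0 i <= x ord0 i <= hi ord0 i].
Definition box_vol (lo hi : V) : R := \prod_(i < n) Num.max 0 (hi ord0 i - lo ord0 i).
Definition lebesgue_null (A : set V) : Prop :=
  forall eps : R, 0 < eps -> exists lo hi : nat -> V,
    A `<=` \bigcup_k box (lo k) (hi k) /\
    forall N, \sum_(k < N) box_vol (lo k) (hi k) <= eps.

(* A classifier: a partition P of R^n with distinguished member Rf (the
   refinement set, possibly empty) which is meagre and Lebesgue null. *)
Definition is_classifier (P : set (set V)) (Rf : set V) : Prop :=
  [/\ P Rf,
      (forall A, P A -> A <> Rf -> A !=set0),
      (forall A B, P A -> P B -> A <> B -> A `&` B = set0),
      (forall x : V, exists A, P A /\ A x) &
      (meagre Rf /\ lebesgue_null Rf)].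

Definition labels (P : set (set V)) (Rf : set V) : set (set V) := P `\ Rf.

Definition nontrivial (P : set (set V)) (Rf : set V) : Prop :=
  exists A B, labels P Rf A /\ labels P Rf B /\ A <> B.

Definition feature_space (P : set (set V)) (Rf : set V) : set V :=
  \bigcup_(A in labels P Rf) A.

Definition is_anchor (P : set (set V)) (x c : V) (r : R) : Prop :=
  x \in eball c r /\ exists A, [/\ P A, A x & eball c r `<=` A].

Definition coverage (P : set (set V)) (x : V) : \bar R :=
  ereal_sup ([set (r%:E)%E | r in [set r | exists c, is_anchor P x c r]] `|` [set 0%E]).

Definition infinite_pointwise_coverage (P : set (set V)) (Rf : set V) : Prop :=
  forall x, feature_space P Rf x -> coverage P x = (+oo)%E.

Definition dotv (a x : V) : R := \sum_(i < n) a ord0 i * x ord0 i.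
Definition refined_linear (P : set (set V)) (Rf : set V) : Prop :=
  is_classifier P Rf /\
  exists (a : V) (b : R), a != 0 /\
    Rf = [set x | dotv a x = b] /\
    P = [set Rf; [set x | dotv a x < b]; [set x | dotv a x > b]].

End Defs.

(* Main.v *)
Require Import Defs.
From HB Require Import structures.
From mathcomp Require Import all_boot all_order all_algebra.
From mathcomp Require Import all_classical all_reals.
From mathcomp Require Import ereal topology normedtype sequences.
From mathcomp Require Import ring lra.
Set Implicit Arguments. Unset Strict Implicit. Unset Printing Implicit Defensive.
Import Order.TTheory GRing.Theory Num.Theory.
Import numFieldNormedType.Exports.
Local Open Scope classical_set_scope.
Local Open Scope ring_scope.

Section Basic.
Variables (R : realType) (n : nat).
Local Notation V := 'rV[R]_n.
Implicit Types (a b x y z : V).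

Lemma dotvC a b : dotv a b = dotv b a.
Proof. by apply: eq_bigr => i _; rewrite mulrC. Qed.
Lemma dotvDr a x y : dotv a (x + y) = dotv a x + dotv a y.
Proof. rewrite /dotv -big_split; apply: eq_bigr => i _; rewrite !mxE /=; ring. Qed.
Lemma dotvBr a x y : dotv a (x - y) = dotv a x - dotv a y.
Proof. rewrite /dotv -sumrB; apply: eq_bigr => i _; rewrite !mxE /=; ring. Qed.
Lemma dotvNr a x : dotv a (- x) = - dotv a x.
Proof. rewrite /dotv -sumrN; apply: eq_bigr => i _; rewrite !mxE; ring. Qed.
Lemma dotvZr a k x : dotv a (k *: x) = k * dotv a x.
Proof. rewrite /dotv mulr_sumr; apply: eq_bigr => i _; rewrite !mxE; ring. Qed.
Lemma dotvDl a x y : dotv (x + y) a = dotv x a + dotv y a.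
Proof. by rewrite dotvC dotvDr !(dotvC a). Qed.
Lemma dotvBl a x y : dotv (x - y) a = dotv x a - dotv y a.
Proof. by rewrite dotvC dotvBr !(dotvC a). Qed.
Lemma dotvNl a x : dotv (- x) a = - dotv x a.
Proof. by rewrite dotvC dotvNr dotvC. Qed.
Lemma dotvZl a k x : dotv (k *: x) a = k * dotv x a.
Proof. by rewrite dotvC dotvZr dotvC. Qed.

Lemma dotv_ge0 a : 0 <= dotv a a.
Proof. by apply: sumr_ge0 => i _; rewrite -expr2 sqr_ge0. Qed.

Lemma dotv_gt0 a : a != 0 -> 0 < dotv a a.
Proof.
move=> a0; rewrite lt_neqAle dotv_ge0 andbT eq_sym; apply/negP => /eqP H.
move/negP: a0; apply; apply/eqP/matrixP => i j; rewrite (ord1 i) mxE.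
have : a ord0 j * a ord0 j = 0.
  apply: (psumr_eq0P _ H) => // k _; by rewrite -expr2 sqr_ge0.
by move/eqP; rewrite mulf_eq0 orbb => /eqP.
Qed.

Lemma dotv_entry_le a i : a ord0 i ^+ 2 <= dotv a a.
Proof.
rewrite /dotv (bigD1 i) //= -expr2 lerDl; apply: sumr_ge0 => j _.
by rewrite -expr2 sqr_ge0.
Qed.

Lemma dot_bound a b d : (forall i, `|b ord0 i| <= d) ->
  `|dotv a b| <= (\sum_i `|a ord0 i|) * d.
Proof.
move=> H; rewrite /dotv mulr_suml; apply: le_trans (ler_norm_sum _ _ _) _.
apply: ler_sum => i _; rewrite normrM; apply: ler_wpM2l => //.
Qed.

Lemma edist_lt x (c : V) (r : R) : Defs.edist x c < r <-> 0 < r /\ dotv (x - c) (x - c) < r ^+ 2.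
Proof.
have E : \sum_(i < n) (x ord0 i - c ord0 i) ^+ 2 = dotv (x - c) (x - c).
  by apply: eq_bigr => i _; rewrite !mxE expr2.
rewrite /Defs.edist E; split.
  move=> H; have r0 : 0 < r by apply: le_lt_trans H; exact: sqrtr_ge0.
  split => //; rewrite -(ltr_sqrt) ?exprn_gt0 // sqrtr_sqr gtr0_norm //.
move=> [r0 H]; rewrite -(gtr0_norm r0) -sqrtr_sqr ltr_sqrt ?exprn_gt0 //.
Qed.

End Basic.

Section H.
Variables (R : realType) (n : nat).
Local Notation V := 'rV[R]_n.

Lemma halfspace_of_anchors (L : set V) (x : V) :
  (forall M : R, exists c r, M < r /\ Defs.edist x c < r /\ Defs.eball c r `<=` L) ->
  exists w : V, (forall y, 0 < dotv w (y - x) -> L y) /\ (w = 0 -> forall y, L y).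
Proof.
move=> H.
have /choice [f Hf] : forall k : nat, exists cr : V * R,
    k%:R < cr.2 /\ Defs.edist x cr.1 < cr.2 /\ Defs.eball cr.1 cr.2 `<=` L.
  by move=> k; have [c [r [? [? ?]]]] := H k%:R; exists (c, r).
pose c k := (f k).1; pose r k := (f k).2.
have r0 k : 0 < r k by have [+ _] := Hf k; apply: le_lt_trans.
pose wk k : V := (r k)^-1 *: (c k - x).
have dE k : c k - x = r k *: wk k.
  by rewrite /wk scalerA mulfV ?scale1r // gt_eqF.
have Sdd k : dotv (c k - x) (c k - x) < r k ^+ 2.
  have [_ [/edist_lt [_ +] _]] := Hf k.
  by rewrite -opprB dotvNl dotvNr opprK.
have wkb k i : `|wk k ord0 i| <= 1.
  have h1 := dotv_entry_le (c k - x) i.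
  have h2 := Sdd k.
  rewrite /wk mxE normrM gtr0_norm ?invr_gt0 // ler_pdivrMl // mulr1.
  rewrite ler_norml; move: h1; rewrite !mxE => h1.
  have h3 := le_lt_trans h1 h2; move: h3 (r0 k).
  generalize (r k) (c k ord0 i - x ord0 i) => rr dd h3 hr.
  apply/andP; split; nra.
clearbody wk.
pose K := [set v : V | forall i, `[-1, 1]%classic (v ord0 i)].
have cK : compact K := @rV_compact R n (fun=> (`[-1, 1]%classic : set R)) (fun i => @segment_compact R (-1) 1).
have [w [_ clw]] : exists w, K w /\ cluster (wk @ \oo) w.
  have [] := cK (wk @ \oo) _ _.
  - exists 0%N => // k _ i; rewrite /= in_itv /= -ler_norml; exact: wkb.
  - by move=> w [? ?]; exists w.
have ext : forall d : R, 0 < d -> forall M : R,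
    exists k, M < r k /\ forall i, `|wk k ord0 i - w ord0 i| < d.
  move=> d d0 M.
  pose N := (Num.trunc M).+1.
  have := clw (wk @` [set k | (N <= k)%N]) (ball w d) _ (nbhsx_ballx w d d0).
  case.
    by apply: filterS (nbhs_infty_ge N) => k Hk; exists k.
  move=> z [[k Nk <-] Bz]; exists k; split.
    apply: lt_le_trans (truncnS_gt M) _.
    apply: le_trans (ltW (Hf k).1); by rewrite ler_nat.
  move=> i; case: Bz => _ /(_ ord0 i).
  by rewrite -ball_normE /ball_ /= distrC.
have key : forall y k, dotv (y - x) (y - x) - 2 * r k * dotv (y - x) (wk k) +
    r k ^+ 2 * dotv (wk k) (wk k) < r k ^+ 2 -> L y.
  move=> y k Hlt; apply: (Hf k).2.2; rewrite /Defs.eball /=; apply/edist_lt.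
  split; first exact: r0.
  have -> : y - c k = (y - x) - (c k - x) by rewrite opprB addrA subrK.
  rewrite dE; move: Hlt; generalize (y - x) => v Hlt.
  rewrite !dotvBl !dotvBr !dotvZl !dotvZr (dotvC (wk k) v).
  by move: Hlt; congr (_ < _); ring.
have Sdw k : r k ^+ 2 * dotv (wk k) (wk k) < r k ^+ 2.
  by move: (Sdd k); rewrite dE dotvZl dotvZr mulrA -expr2.
exists w; split.
  move=> y ay; set v := y - x; set aa := dotv w v in ay.
  set s1 := \sum_i `|v ord0 i|.
  have s10 : 0 <= s1 by apply: sumr_ge0.
  have d0 : 0 < aa / (2 * (s1 + 1)) by apply: divr_gt0 => //; nra.
  have [k [Mk Hk]] := ext _ d0 (dotv v v / aa).
  apply: (key y k).
  have hb := dot_bound v (d := aa / (2 * (s1 + 1))) (b := wk k - w).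
  have {hb} hb : `|dotv v (wk k - w)| <= s1 * (aa / (2 * (s1 + 1))).
    by apply: hb => i; rewrite !mxE; apply: ltW.
  have e1 : s1 * (aa / (2 * (s1 + 1))) <= aa / 2.
    rewrite mulrA ler_pdivrMr; last nra.
    rewrite mulrAC ler_pdivlMr //; nra.
  have e2 : aa / 2 <= dotv v (wk k).
    have : dotv v (wk k) = aa + dotv v (wk k - w) by rewrite /aa dotvBr (dotvC v w); ring.
    move=> ->; move: hb; rewrite ler_norml => /andP [hb _]; lra.
  have e3 : dotv v v < r k * aa by rewrite -ltr_pdivrMr.
  have h4 : r k * (aa / 2) <= r k * dotv v (wk k) by rewrite ler_pM2l.
  have := Sdw k; lra.
move=> w0 y; set v := y - x.
set s1 := \sum_i `|v ord0 i|.
have s10 : 0 <= s1 by apply: sumr_ge0.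
pose d := (4 * (s1 + n%:R + 1))^-1.
have n0 : 0 <= n%:R :> R by rewrite ler0n.
have d0 : 0 < d by rewrite invr_gt0; nra.
have [k [Mk Hk]] := ext _ d0 (2 * dotv v v + 2).
apply: (key y k); rewrite -/v.
have Hk' : forall i, `|wk k ord0 i| <= d.
  by move=> i; move: (Hk i); rewrite w0 mxE subr0 => /ltW.
have hb : `|dotv v (wk k)| <= s1 * d by apply: dot_bound.
have hq : `|dotv (wk k) (wk k)| <= (\sum_i `|wk k ord0 i|) * d by apply: dot_bound.
have hs : \sum_i `|wk k ord0 i| <= n%:R * d.
  apply: le_trans (ler_sum _ (fun i _ => Hk' i)) _.
  by rewrite sumr_const card_ord mulr_natl.
have dd : d * (4 * (s1 + n%:R + 1)) = 1 by rewrite mulVf // gt_eqF //; nra.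
have e1 : s1 * d <= 1/4 by nra.
have e2 : n%:R * d <= 1/4 by nra.
have e3 : d <= 1/4 by nra.
have hq2 : dotv (wk k) (wk k) <= 1/4.
  apply: le_trans (ler_norm _) _; apply: le_trans hq _.
  apply: le_trans (ler_wpM2r (ltW d0) hs) _; nra.
move: hb; rewrite ler_norml => /andP [hb1 hb2].
have := r0 k; have := dotv_ge0 v; have := dotv_ge0 (wk k).
generalize (r k) (dotv v (wk k)) (dotv v v) (dotv (wk k) (wk k)) Mk hb1 hb2 hq2.
move=> rr t sv q h1 h2 h3 h4 h5 h6 h7.
have t4 : -(1/4) <= t by lra.
have p1 : 0 <= rr * (t + 1/4) by apply: mulr_ge0; lra.
have p2 : 0 <= rr ^+ 2 * (1/4 - q) by apply: mulr_ge0; [apply: sqr_ge0 | lra].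
have p3 : 0 < 3 * (rr - 2/3) ^+ 2 + 4/3 by have := sqr_ge0 (rr - 2/3); lra.
rewrite mulrDr in p1; rewrite mulrBr in p2; lra.
Qed.
End H.

Section D.
Variables (R : realType) (n : nat).
Local Notation V := 'rV[R]_n.

Lemma nabs_le (x : R) : - `|x| <= x.
Proof. by rewrite lerNl -normrN ler_norm. Qed.

Lemma halfD2 (u w z p : V) : u != 0 -> w != 0 ->
  (forall y, 0 < dotv w (y - z) -> 0 < dotv u (y - p) -> False) ->
  (forall y, dotv u y < dotv u z -> 0 < dotv w (y - z)) /\ dotv u z <= dotv u p.
Proof.
move=> u0 w0 H.
have Sp := dotv_gt0 u0; move: Sp; set S := dotv u u => Sp.
pose s := (`|dotv u (z - p)| + 1) / S.
have hs : s * S = `|dotv u (z - p)| + 1 by rewrite /s mulfVK // gt_eqF.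
have hs0 : 0 < s by rewrite /s divr_gt0 // ltr_pwDr.
pose g := S *: w - dotv u w *: u.
have gu : dotv u g = 0 by rewrite /g dotvBr !dotvZr (dotvC u w) -/S; ring.
have gg : dotv g g = S * dotv g w.
  by rewrite {1}/g dotvBr !dotvZr (dotvC g u) gu; ring.
have g0 : g = 0.
  case: (eqVneq g 0) => // gn0; exfalso.
  have Sg := dotv_gt0 gn0; rewrite gg in Sg.
  have gw0 : 0 < dotv g w by rewrite -(pmulr_rgt0 _ Sp).
  pose t := (`|s * dotv u w| + 1) / dotv g w.
  have ht : t * dotv g w = `|s * dotv u w| + 1 by rewrite /t mulfVK // gt_eqF.
  apply: (H (z + t *: g + s *: u)).
    rewrite !dotvBr !dotvDr !dotvZr (dotvC w g) (dotvC w u) ht.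
    have := nabs_le (s * dotv u w); lra.
  rewrite !dotvBr !dotvDr !dotvZr gu -/S hs.
  have := nabs_le (dotv u (z - p)); rewrite dotvBr; lra.
pose mu := dotv u w / S.
have wE : w = mu *: u.
  move/eqP: g0; rewrite subr_eq0 => /eqP g0.
  apply: (@scalerI _ _ S); first by rewrite gt_eqF.
  by rewrite g0 scalerA /mu mulrC mulfVK // gt_eqF.
have mu0 : mu != 0 by apply: contra w0; rewrite wE => /eqP ->; rewrite scale0r.
have mun : mu < 0.
  rewrite lt_neqAle mu0 /=; rewrite leNgt; apply/negP => mup.
  apply: (H (z + s *: u)).
    rewrite wE addrAC subrr add0r dotvZl dotvZr -/S; apply: mulr_gt0 => //.
    exact: mulr_gt0.
  rewrite dotvBr dotvDr dotvZr -/S hs.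
  have := nabs_le (dotv u (z - p)); rewrite dotvBr; lra.
have key : forall y, dotv u y < dotv u z -> 0 < dotv w (y - z).
  move=> y hy; rewrite wE dotvZl dotvBr; nra.
split => //.
rewrite leNgt; apply/negP => hzp.
pose s' := (dotv u z - dotv u p) / (2 * S).
have hs' : s' * S = (dotv u z - dotv u p) / 2.
  by rewrite /s'; field; rewrite gt_eqF.
apply: (H (p + s' *: u)).
  apply: key; rewrite dotvDr dotvZr hs'; lra.
rewrite addrAC subrr add0r dotvZr hs'; lra.
Qed.

End D.

Section Bai.
Variables (R : realType) (n : nat).
Local Notation V := 'rV[R]_n.

Lemma meagre_no_open (Rf : set V) : Defs.meagre Rf ->
  forall O : set V, open O -> O !=set0 -> ~ (O `<=` Rf).
Proof.
move=> [F [nd sub]] O oO [y0 Oy0] sO.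
have cplt : forall G : set_system V, ProperFilter G -> cauchy G -> cvg G.
  exact: cauchy_cvg.
pose VC := HB.pack_for (completeNormedModType R) V
  (Uniform_isComplete.Build V cplt).
have hd : forall k, open (~` closure (F k) : set VC) /\ dense (~` closure (F k) : set VC).
  move=> k; split. apply: closed_openC. apply: closed_closure.
  move=> O' [z O'z] oO'.
  case: (pselect (O' `&` ~` closure (F k) !=set0)) => // hne; exfalso.
  have sub' : O' `<=` closure (F k).
    move=> x O'x; apply: contrapT => ncl; apply: hne; by exists x.
  move: sub'; rewrite (open_subsetE _ oO') => /(_ z O'z).
  by rewrite (nd k).
have D := @Baire R VC _ hd.
have [y [Oy Iy]] := D O (ex_intro _ y0 Oy0) oO.
have [k _ Fky] := sub y (sO y Oy).
exact: (Iy k I (subset_closure Fky)).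
Qed.

End Bai.

Section Op.

Variables (R : realType) (n : nat).
Local Notation V := 'rV[R]_n.

Lemma open_slab (u : V) (a b : R) : open [set y : V | a < dotv u y < b].
Proof.
rewrite openE => y /= /andP [h1 h2].
pose s1 := \sum_i `|u ord0 i|.
have s10 : 0 <= s1 by apply: sumr_ge0.
pose m := Num.min (dotv u y - a) (b - dotv u y).
have m0 : 0 < m by rewrite lt_min; apply/andP; split; lra.
pose e := m / (s1 + 1).
have e0 : 0 < e by apply: divr_gt0 => //; lra.
have hse : s1 * e < m.
  rewrite /e mulrA ltr_pdivrMr; last lra.
  nra.
rewrite /interior /=; apply/nbhs_ballP; exists e => // z Bz.
have hb : `|dotv u (z - y)| <= s1 * e.
  apply: dot_bound => i; case: Bz => _ /(_ ord0 i).
  by rewrite -ball_normE /ball_ /= !mxE distrC => /ltW.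
move: hb; rewrite ler_norml dotvBr => /andP [hb1 hb2].
have : m <= dotv u y - a by rewrite ge_min lexx.
have : m <= b - dotv u y by rewrite ge_min lexx orbT.
move=> hm1 hm2 /=; apply/andP; split; lra.
Qed.

Lemma eball_shift (c x u : V) (r : R) : Defs.edist x c < r ->
  exists e, 0 < e /\ Defs.edist (x + e *: u) c < r.
Proof.
move=> /edist_lt [r0 h].
suff [e [e0 he]] : exists e, 0 < e /\ dotv ((x - c) + e *: u) ((x - c) + e *: u) < r ^+ 2.
  exists e; split => //; apply/edist_lt; split => //.
  by rewrite addrAC.
move: h; generalize (x - c) => d h.
pose gap := r ^+ 2 - dotv d d.
have g0 : 0 < gap by rewrite /gap subr_gt0.
pose K := dotv u d ^+ 2 + dotv u u + 2.
have K1 : 1 <= K by have := dotv_ge0 u; rewrite /K; have := sqr_ge0 (dotv u d); lra.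
pose e := gap / (K * (gap + 1)).
have hK : e * (K * (gap + 1)) = gap by rewrite /e mulfVK // mulf_neq0 // gt_eqF //; lra.
have e0 : 0 < e by rewrite /e divr_gt0 // mulr_gt0 //; lra.
have e1 : e <= 1 by rewrite /e ler_pdivrMr ?mul1r ?mulr_gt0 //; nra.
clearbody e.
have eK : e * K < gap.
  have : e * K * gap < e * K * (gap + 1) by rewrite ltr_pM2l; [lra | apply: mulr_gt0; lra].
  rewrite mulrA in hK; rewrite hK => hh; nra.
exists e; split => //.
rewrite !dotvDl !dotvDr !dotvZl !dotvZr (dotvC d u).
have := dotv_ge0 u.
move: hK eK e1 e0 g0; rewrite /K /gap.
generalize (dotv u d) (dotv u u) (dotv d d).
move=> t q s hK eK e1 e0 g0 hq.
have h1 : 0 <= (1 - e) * (e * q) by apply: mulr_ge0; [lra | apply: mulr_ge0; lra].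
have h2 : 0 <= e * (t - 1) ^+ 2 by apply: mulr_ge0; [lra | apply: sqr_ge0].
nra.
Qed.

End Op.

Section M.
Variables (R : realType) (n : nat).
Local Notation V := 'rV[R]_n.

Lemma anchors (P : set (set V)) Rf (L : set V) x :
  is_classifier P Rf -> labels P Rf L -> L x -> coverage P x = +oo%E ->
  forall M : R, exists c r, M < r /\ Defs.edist x c < r /\ Defs.eball c r `<=` L.
Proof.
move=> [PRf Hne Hdisj Hcov _] [PL LnR] Lx Hc M.
apply: contrapT => Hn.
have : (coverage P x <= (Num.max M 0)%:E)%E.
  apply: ub_ereal_sup => z [[r [c [xin [A [PA Ax sub]]]] <-]|->]; last first.
    by rewrite lee_fin le_max lexx orbT.
  rewrite lee_fin le_max; apply/orP; left; rewrite leNgt; apply/negP => Mr.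
  apply: Hn; exists c, r; split => //; split; first by move: xin; rewrite in_setE.
  have AL : A = L.
    apply: contrapT => ne; have E := Hdisj _ _ PA PL ne.
    by have : (A `&` L) x by []; rewrite E.
  by rewrite -AL.
by rewrite Hc leNgt ltey.
Qed.

End M.

Unset Implicit Arguments.
Theorem theorem3 (R : realType) (n : nat) (P : set (set 'rV[R]_n)) (Rf : set 'rV[R]_n) :
  is_classifier P Rf -> nontrivial P Rf -> infinite_pointwise_coverage P Rf ->
  refined_linear P Rf.
Proof.
move=> hcl [A [B [LA [LB AB]]]] hcov.
have hcl' := hcl; case: hcl' => PRf Hne Hdisj Hcov [Hmea Hnull].
have disj L1 L2 y : labels P Rf L1 -> labels P Rf L2 -> L1 <> L2 -> L1 y -> L2 y -> False.
  move=> [P1 _] [P2 _] ne y1 y2; have E := Hdisj _ _ P1 P2 ne.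
  by have : (L1 `&` L2) y by []; rewrite E.
have RfL L y : labels P Rf L -> L y -> Rf y -> False.
  move=> [P1 ne] y1 y2; have E := Hdisj _ _ P1 PRf ne.
  by have : (L `&` Rf) y by []; rewrite E.
have anch L x : labels P Rf L -> L x -> forall M : R,
    exists c r, M < r /\ Defs.edist x c < r /\ Defs.eball c r `<=` L.
  move=> hL Lx; apply: (anchors hcl hL Lx); apply: hcov; by exists L.
have other L : labels P Rf L -> exists z, ~ L z.
  move=> hL; case: (pselect (L = A)) => [->|LA'].
    have [z Bz] := Hne B LB.1 LB.2; exists z => Az; exact: disj A B z LA LB AB Az Bz.
  have [z Az] := Hne A LA.1 LA.2; exists z => Lz; exact: disj L A z hL LA LA' Lz Az.
have hp L x : labels P Rf L -> L x ->
    exists w : 'rV[R]_n, w != 0 /\ forall y, 0 < dotv w (y - x) -> L y.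
  move=> hL Lx; have [w [H1 H2]] := halfspace_of_anchors (anch L x hL Lx).
  exists w; split => //; apply/eqP => w0.
  by have [z nz] := other L hL; apply: nz; apply: H2.
have [p Ap] := Hne A LA.1 LA.2.
have [u [u0 HA]] := hp A p LA Ap.
have Su := dotv_gt0 u0.
have pt m : exists y, dotv u y = m.
  by exists ((m / dotv u u) *: u); rewrite dotvZr mulfVK // gt_eqF.
have down C z : labels P Rf C -> C <> A -> C z ->
    (forall y, dotv u y < dotv u z -> C y) /\ dotv u z <= dotv u p.
  move=> hC CA Cz; have [w [w0 HC]] := hp C z hC Cz.
  have [h1 h2] := halfD2 u0 w0
    (fun y a b => disj C A y hC LA CA (HC y a) (HA y b)).
  by split => // y hy; apply: HC; apply: h1.
have [q Bq] := Hne B LB.1 LB.2.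
have BA : B <> A by move=> e; apply: AB.
have [downB _] := down B q LB BA Bq.
have up a : A a -> forall y, dotv u a < dotv u y -> A y.
  move=> Aa; have [w [w0 HAa]] := hp A a LA Aa.
  have nu0 : - u != 0 by rewrite oppr_eq0.
  have [h1 _] := halfD2 nu0 w0 (z:=a) (p:=q) (fun y h h' =>
    disj A B y LA LB AB (HAa y h) (downB y ltac:(move: h'; rewrite dotvNl dotvBr; lra))).
  move=> y hy; apply: HAa; apply: h1; rewrite !dotvNl; lra.
have sepAB a b : A a -> B b -> dotv u b <= dotv u a.
  move=> Aa Bb; rewrite leNgt; apply/negP => h.
  have [y hy] := pt ((dotv u a + dotv u b) / 2).
  have [downb _] := down B b LB BA Bb.
  apply: (disj A B y LA LB AB); [apply: (up a Aa) | apply: downb]; rewrite hy; lra.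
have third C : labels P Rf C -> C = A \/ C = B.
  move=> hC; case: (pselect (C = A)) => [->|CA]; first by left.
  case: (pselect (C = B)) => [->|CB]; first by right.
  exfalso; have [z Cz] := Hne C hC.1 hC.2.
  have [downC _] := down C z hC CA Cz.
  have [y hy] := pt (Num.min (dotv u z) (dotv u q) - 1).
  have m1 : Num.min (dotv u z) (dotv u q) <= dotv u z by rewrite ge_min lexx.
  have m2 : Num.min (dotv u z) (dotv u q) <= dotv u q by rewrite ge_min lexx orbT.
  apply: (disj C B y hC LB CB); [apply: downC | apply: downB]; rewrite hy; lra.
have tri y : Rf y \/ A y \/ B y.
  have [X [PX Xy]] := Hcov y.
  case: (pselect (X = Rf)) => [<-|XR]; first by left.
  by case: (third X (conj PX XR)) => <-; right; [left|right].
pose SA := [set dotv u a | a in A].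
pose SB := [set dotv u b | b in B].
have SAne : SA !=set0 by exists (dotv u p), p.
have SBne : SB !=set0 by exists (dotv u q), q.
have lbA : has_lbound SA by exists (dotv u q) => _ [a Aa <-]; exact: sepAB.
have ubB : has_ubound SB by exists (dotv u p) => _ [b Bb <-]; exact: sepAB.
pose al := inf SA.
pose be := sup SB.
have Aal y : A y <-> al < dotv u y.
  split => [Ay|hy].
    have [c [r [_ [yin sub]]]] := anch A y LA Ay 0.
    have [e [e0 he]] := eball_shift (- u) yin.
    have Ay' : A (y + e *: - u) by apply: sub.
    have := ge_inf lbA (ex_intro2 _ _ _ Ay' erefl).
    rewrite dotvDr dotvZr dotvNr -/al => h.
    have : 0 < e * dotv u u by apply: mulr_gt0.
    lra.
  have [_ [a Aa <-] ha] := inf_adherent (eps := dotv u y - al) ltac:(lra) (conj SAne lbA).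
  apply: (up a Aa); rewrite -/al in ha; lra.
have Bbe y : B y <-> dotv u y < be.
  split => [By|hy].
    have [c [r [_ [yin sub]]]] := anch B y LB By 0.
    have [e [e0 he]] := eball_shift u yin.
    have By' : B (y + e *: u) by apply: sub.
    have := ub_le_sup ubB (ex_intro2 _ _ _ By' erefl).
    rewrite dotvDr dotvZr -/be => h.
    have : 0 < e * dotv u u by apply: mulr_gt0.
    lra.
  have [_ [b Bb <-] hb] := sup_adherent (eps := be - dotv u y) ltac:(lra) (conj SBne ubB).
  have [downb _] := down B b LB BA Bb.
  apply: downb; rewrite -/be in hb; lra.
have beal : be <= al.
  apply: ge_sup => // _ [b Bb <-]; apply: lb_le_inf => // _ [a Aa <-]; exact: sepAB.
have albe : al = be.
  apply/eqP; rewrite eq_le beal andbT leNgt; apply/negP => lt.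
  have ne : [set y | be < dotv u y < al] !=set0.
    have [y hy] := pt ((al + be) / 2); exists y; rewrite /= hy; apply/andP; split; lra.
  apply: (meagre_no_open Hmea (@open_slab _ _ u be al) ne).
  move=> y /= /andP [h1 h2].
  case: (tri y) => [//|[/Aal|/Bbe]]; lra.
have RfE : Rf = [set x | dotv u x = al].
  apply/funext => y; apply/propext; split => /=.
    move=> Rfy; case: (ltgtP (dotv u y) al) => // h; exfalso.
      by apply: (RfL B y LB) => //; apply/Bbe; rewrite -albe.
    by apply: (RfL A y LA) => //; apply/Aal.
  move=> hy; case: (tri y) => [//|[/Aal|/Bbe]]; rewrite -?albe; lra.
have AE : A = [set x | dotv u x > al] by apply/funext => y; apply/propext; apply: Aal.
have BE : B = [set x | dotv u x < al].
  by apply/funext => y; apply/propext; rewrite albe; apply: Bbe.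
split => //; exists u, al; split => //; split => //.
apply/funext => X; apply/propext; split.
  move=> PX; case: (pselect (X = Rf)) => [->|XR]; first by left; left.
  by case: (third X (conj PX XR)) => ->; [right | left; right].
by move=> [[->|->]|->] //; [rewrite -BE; exact: LB.1 | rewrite -AE; exact: LA.1].
Qed.
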